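(* Let $A\in\mathbb R^{N\times 2d}$ and let $K:\mathbb T^N\to\mathbb R^{2d}$ be continuous. Suppose that for every $\omega\in\mathbb T^N$ the map $x\mapsto\Phi(x,\omega)=x+K(\omega+Ax\bmod1)$ is a symplectic twist diffeomorphism of $\mathbb R^{2d}$. Then $\widehat\Phi(\cdot,\omega)-\mathrm{id}$ is quasiperiodic.
   Context: Points of $\mathbb R^{2d}$ are written $(q,p)$, $q,p\in\mathbb R^d$, symplectic form $\sum dq_i\wedge dp_i$; $\mathbb T^N=[0,1]^N$ with $0=1$. A symplectic diffeomorphism $\Phi=(Q,P)$ is twist if for every $p$ the map $q\mapsto Q(q,p)$ is a diffeomorphism of $\mathbb R^d$; $\hat q(Q,p)$ denotes its inverse, $\hat P(Q,p)=P(\hat q(Q,p),p)$, and $\widehat\Phi(Q,p)=(\hat q(Q,p),\hat P(Q,p))$. A function $g:\mathbb R^{2d}\to\mathbb R^{2d}$ is quasiperiodic if $g(x)=\gamma(c+Bx)$ for some $M$, some continuous $\mathbb Z^M$-periodic $\gamma:\mathbb R^M\to\mathbb R^{2d}$, some $c\in\mathbb R^M$ and some matrix $B\in\mathbb R^{M\times2d}$. *)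

(* Defs.v *)
From HB Require Import structures.
From mathcomp Require Import all_boot all_order all_algebra.
From mathcomp Require Import all_classical all_reals all_analysis.
Set Implicit Arguments. Unset Strict Implicit. Unset Printing Implicit Defensive.
Import Order.TTheory GRing.Theory Num.Theory.
Import numFieldNormedType.Exports.
Local Open Scope ring_scope.
Local Open Scope classical_set_scope.

(* Points of R^(2d) are row vectors x = row_mx q p : 'rV_(d + d),
   q = lsubmx x, p = rsubmx x. *)

Section Defs.
Variable R : realType.

Definition C1 (m n : nat) (f : 'rV[R]_m -> 'rV[R]_n) : Prop :=
  (forall x, differentiable f x) /\ (forall v, continuous (fun x => 'd f x v)).

Definition diffeo (n : nat) (f : 'rV[R]_n -> 'rV[R]_n) : Prop :=
  exists g : 'rV[R]_n -> 'rV[R]_n,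
    cancel f g /\ cancel g f /\ C1 f /\ C1 g.

Definition omega (d : nat) (u v : 'rV[R]_(d + d)) : R :=
  \sum_(i < d) (lsubmx u 0 i * rsubmx v 0 i - rsubmx u 0 i * lsubmx v 0 i).

Definition symplectic_diffeo (d : nat) (Phi : 'rV[R]_(d + d) -> 'rV[R]_(d + d)) : Prop :=
  diffeo Phi /\
  forall x u v, omega ('d Phi x u) ('d Phi x v) = omega u v.

Definition Qof (d : nat) (Phi : 'rV[R]_(d + d) -> 'rV[R]_(d + d)) (q p : 'rV[R]_d) :=
  lsubmx (Phi (row_mx q p)).
Definition Pof (d : nat) (Phi : 'rV[R]_(d + d) -> 'rV[R]_(d + d)) (q p : 'rV[R]_d) :=
  rsubmx (Phi (row_mx q p)).

Definition twist (d : nat) (Phi : 'rV[R]_(d + d) -> 'rV[R]_(d + d)) : Prop :=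
  forall p, diffeo (fun q => Qof Phi q p).

Definition symplectic_twist_diffeo (d : nat) (Phi : 'rV[R]_(d + d) -> 'rV[R]_(d + d)) :=
  symplectic_diffeo Phi /\ twist Phi.

(* qhat(Q,p): the inverse of q |-> Q(q,p) (unique when Phi is twist) *)
Definition qhat (d : nat) (Phi : 'rV[R]_(d + d) -> 'rV[R]_(d + d)) (Q p : 'rV[R]_d) :=
  xget 0 [set q | Qof Phi q p = Q].

Definition hatPhi (d : nat) (Phi : 'rV[R]_(d + d) -> 'rV[R]_(d + d)) (x : 'rV[R]_(d + d)) :=
  let Q := lsubmx x in let p := rsubmx x in
  row_mx (qhat Phi Q p) (Pof Phi (qhat Phi Q p) p).

Definition Zperiodic (M n : nat) (g : 'rV[R]_M -> 'rV[R]_n) : Prop :=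
  forall (y : 'rV[R]_M) (k : 'rV[int]_M), g (y + map_mx (fun z : int => z%:~R) k) = g y.

Definition quasiperiodic (d : nat) (g : 'rV[R]_(d + d) -> 'rV[R]_(d + d)) : Prop :=
  exists (M : nat) (gamma : 'rV[R]_M -> 'rV[R]_(d + d)) (c : 'rV[R]_M) (B : 'M[R]_(M, d + d)),
    continuous gamma /\ Zperiodic gamma /\
    forall x, g x = gamma (c + (B *m x^T)^T).

End Defs.

(* Main.v *)
Set Warnings "-all".
Set Implicit Arguments. Unset Strict Implicit.
Require Import Defs.
From HB Require Import structures.
From mathcomp Require Import all_boot all_order all_algebra.
From mathcomp Require Import all_classical all_reals all_analysis.
Import Order.TTheory GRing.Theory Num.Theory.
Import numFieldNormedType.Exports.
Local Open Scope ring_scope.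
Local Open Scope classical_set_scope.

Definition lin (R : realType) N D (A : 'M[R]_(N, D)) (x : 'rV[R]_D) : 'rV[R]_N :=
  (A *m x^T)^T.

Lemma linP (R : realType) N D (A : 'M[R]_(N, D)) a x y :
  lin A (a *: x + y) = a *: lin A x + lin A y.
Proof. by rewrite /lin !linearP. Qed.

Lemma linD (R : realType) N D (A : 'M[R]_(N, D)) x y :
  lin A (x + y) = lin A x + lin A y.
Proof. by have := linP A 1 x y; rewrite !scale1r. Qed.

Lemma linN (R : realType) N D (A : 'M[R]_(N, D)) x :
  lin A (- x) = - lin A x.
Proof. by have := linP A (-1) x 0; rewrite /lin !trmx0 mulmx0 trmx0 !addr0 !scaleN1r. Qed.

Definition Hf (R : realType) d N (A : 'M[R]_(N, d + d)) (K : 'rV[R]_N -> 'rV[R]_(d + d))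
  (t : 'rV[R]_N) : 'rV[R]_N := t + lin A (row_mx (lsubmx (K t)) (0 : 'rV[R]_d)).

Lemma Qof_eq (R : realType) d N (A : 'M[R]_(N, d + d)) (K : 'rV[R]_N -> 'rV[R]_(d + d)) w q p :
  Qof (fun y => y + K (w + (A *m y^T)^T)) q p = q + lsubmx (K (w + lin A (row_mx q p))).
Proof. by rewrite /Qof linearD /= row_mxKl. Qed.

Lemma Pof_eq (R : realType) d N (A : 'M[R]_(N, d + d)) (K : 'rV[R]_N -> 'rV[R]_(d + d)) w q p :
  Pof (fun y => y + K (w + (A *m y^T)^T)) q p = p + rsubmx (K (w + lin A (row_mx q p))).
Proof. by rewrite /Pof linearD /= row_mxKr. Qed.

Definition Phw (R : realType) d N (A : 'M[R]_(N, d + d)) (K : 'rV[R]_N -> 'rV[R]_(d + d)) w :=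
  fun y : 'rV[R]_(d + d) => y + K (w + (A *m y^T)^T).

Lemma Hf_char (R : realType) d N (A : 'M[R]_(N, d + d)) (K : 'rV[R]_N -> 'rV[R]_(d + d)) t :
  t = Hf A K t + lin A (row_mx (- lsubmx (K t)) 0).
Proof. by rewrite /Hf -oppr0 -opp_row_mx oppr0 linN addrK. Qed.

Lemma Hf_ex (R : realType) d N (A : 'M[R]_(N, d + d)) (K : 'rV[R]_N -> 'rV[R]_(d + d)) :
  (forall w, twist (Phw A K w)) -> forall y, exists t, Hf A K t = y.
Proof.
move=> tw y; have [g [fg [gf _]]] := tw y 0.
have hq := gf 0; rewrite /Phw Qof_eq in hq.
exists (y + lin A (row_mx (g 0) 0)).
rewrite /Hf; set X := lsubmx _.
have -> : X = - g 0 by apply/eqP; rewrite -addr_eq0 addrC hq.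
by rewrite -oppr0 -opp_row_mx oppr0 linN addrK.
Qed.

Lemma Hf_inj (R : realType) d N (A : 'M[R]_(N, d + d)) (K : 'rV[R]_N -> 'rV[R]_(d + d)) :
  (forall w, twist (Phw A K w)) -> forall t1 t2, Hf A K t1 = Hf A K t2 -> t1 = t2.
Proof.
move=> tw t1 t2 e.
have [g [fg [gf _]]] := tw (Hf A K t1) 0.
have h : forall t, Hf A K t = Hf A K t1 ->
    Qof (Phw A K (Hf A K t1)) (- lsubmx (K t)) 0 = 0.
  move=> t ht; rewrite /Phw Qof_eq -ht -Hf_char; exact: addNr.
have e1 := h t1 erefl; have e2 := h t2 (esym e).
have eq : - lsubmx (K t1) = - lsubmx (K t2) :> 'rV[R]_d.
  by rewrite -(fg (- lsubmx (K t1))) -(fg (- lsubmx (K t2))) e1 e2.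
by rewrite (Hf_char A K t1) (Hf_char A K t2) -e eq.
Qed.

Lemma hat_eq (R : realType) d N (A : 'M[R]_(N, d + d)) (K : 'rV[R]_N -> 'rV[R]_(d + d)) :
  (forall w, twist (Phw A K w)) -> forall w x t, Hf A K t = w + lin A x ->
  hatPhi (Phw A K w) x - x = row_mx (- lsubmx (K t)) (rsubmx (K t)).
Proof.
move=> tw w x t ht.
rewrite /hatPhi /=.
set Q := lsubmx x; set p := rsubmx x; set X := lsubmx (K t).
have xE : x = row_mx Q p by rewrite hsubmxK.
have tE : t = w + lin A (row_mx (Q - X) p).
  have -> : row_mx (Q - X) p = row_mx Q p + row_mx (-X) 0 by rewrite add_row_mx addr0.
  by rewrite linD addrA -xE -ht -Hf_char.
have hq : qhat (Phw A K w) Q p = Q - X.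
  rewrite /qhat; apply: xget_unique.
    by rewrite /= /Phw Qof_eq -tE subrK.
  move=> q /= hq'; have [g [fg _]] := tw w p.
  rewrite -(fg q) -(fg (Q - X)); congr g; rewrite hq'.
  by rewrite /Phw Qof_eq -tE subrK.
rewrite hq /Phw Pof_eq -tE; rewrite [X in _ - X]xE opp_row_mx add_row_mx.
by rewrite addrAC subrr add0r addrAC subrr add0r.
Qed.
Lemma per_bounded (R : realType) M n (g : 'rV[R]_M -> 'rV[R]_n) :
  continuous g -> Zperiodic g -> exists b : R, forall y, `|g y| <= b.
Proof.
move=> gc gp.
pose cube := [set v : 'rV[R]_M | forall i, `[(0:R), 1] (v ord0 i)].
have ccube : compact cube.
  by apply: (@rV_compact _ _ (fun=> `[(0:R), 1])) => _; apply: segment_compact.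
have cimg : compact (g @` cube).
  by apply: continuous_compact => //; apply: continuous_subspaceT.
have [b [_ Hb]] := compact_bounded cimg.
exists (b + 1) => y.
pose k := map_mx (fun x : R => Num.floor x) y.
have -> : y = (y - map_mx (fun z : int => z%:~R) k) + map_mx (fun z : int => z%:~R) k.
  by rewrite subrK.
rewrite gp; apply: (Hb (b + 1)); first by rewrite ltrDl.
exists (y - map_mx (fun z : int => z%:~R) k) => //.
move=> i; rewrite !mxE /= in_itv /=.
have := floor_itv (y ord0 i); rewrite intrD => /andP[h1 h2].
apply/andP; split; first by rewrite subr_ge0.
by rewrite lerBlDr addrC ltW.
Qed.
Lemma lin_cont (R : realType) m n p q (f : 'M[R]_(m,n) -> 'M[R]_(p,q)) :
  (forall a x y, f (a *: x + y) = a *: f x + f y) -> continuous f.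
Proof.
move=> fl.
have f0 : f 0 = 0.
  by have := fl 1 0 0; rewrite !scale1r addr0 => h; apply: (@addrI _ (f 0)); rewrite addr0 -h.
have fD : forall x y, f (x + y) = f x + f y by move=> x y; have := fl 1 x y; rewrite !scale1r.
have fZ : forall a x, f (a *: x) = a *: f x by move=> a x; rewrite -[_ *: x]addr0 fl f0 addr0.
have fsum : forall (I : Type) (r : seq I) (F : I -> 'M[R]_(m,n)),
    f (\sum_(i <- r) F i) = \sum_(i <- r) f (F i).
  by move=> I r F; apply: (big_morph f fD f0).
have E : f = fun M => \sum_(i < m) \sum_(j < n) M i j *: f (delta_mx i j).
  apply: funext => M; rewrite {1}(matrix_sum_delta M) fsum.
  by apply: eq_bigr => i _; rewrite fsum; apply: eq_bigr => j _; rewrite fZ.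
have sumc : forall (I : Type) (r : seq I) (G : I -> 'M[R]_(m,n) -> 'M[R]_(p,q)),
    (forall i, continuous (G i)) -> continuous (fun M => \sum_(i <- r) G i M).
  move=> I r G Gc; elim: r => [|a r IH].
    under eq_fun do rewrite big_nil; exact: cst_continuous.
  under eq_fun do rewrite big_cons.
  by move=> x; exact: (continuousD (Gc a x) (IH x)).
rewrite E; apply: (sumc) => i; apply: (sumc) => j x.
apply: continuousZl; exact: coord_continuous.
Qed.
Lemma inv_cont (R : realType) N (H F : 'rV[R]_N -> 'rV[R]_N) (b : R) :
  continuous H -> (forall t1 t2, H t1 = H t2 -> t1 = t2) -> (forall y, H (F y) = y) ->
  (forall y, `|F y - y| <= b) -> continuous F.
Proof.
move=> Hc Hi HF Fb y0.
have b0 : 0 <= b by apply: le_trans (Fb 0); exact: normr_ge0.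
apply/(@cvgrPdist_lt _ _ _ _ (nbhs_filter y0)) => e e0.
set t0 := F y0; set r := b + 1 + b.
pose C := (fun t => `|t0 - t|) @^-1` `[e, r].
have Ccl : closed C.
  apply: (proj1 (continuous_closedP _)); last exact: interval_closed.
  move=> t; apply: continuous_comp; last exact: norm_continuous.
  apply: (@continuousB _ _ _ (fun=> t0) id t); [exact: cst_continuous | exact: cvg_id].
have Cb : bounded_set C.
  exists (`|t0| + r); split; first exact: num_real.
  move=> M hM t Ct /=.
  move: Ct; rewrite /C /= in_itv /= => /andP[_ h].
  have -> : t = t0 - (t0 - t) by rewrite opprB addrC subrK.
  apply: (le_trans (ler_normB _ _)); apply: ltW; apply: le_lt_trans hM.
  by apply: lerD.
have Ccomp := bounded_closed_compact Cb Ccl.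
have HCc : compact (H @` C).
  by apply: continuous_compact => //; apply: continuous_subspaceT.
have HCcl : closed (H @` C) := compact_closed (@norm_hausdorff _ _) HCc.
have ny : ~ (H @` C) y0.
  move=> [t Ct Ht]; have tt0 : t = t0 by apply: Hi; rewrite Ht HF.
  move: Ct; rewrite /C /= tt0 subrr normr0 in_itv /= => /andP[h _].
  by move: (lt_le_trans e0 h); rewrite ltxx.
near=> y.
have hy : ~ (H @` C) y.
  by near: y; apply: open_nbhs_nbhs; split; [exact: closed_openC | exact: ny].
have hy1 : `|y0 - y| < 1.
  by near: y; apply: (proj1 (@cvgrPdist_lt _ _ _ _ (nbhs_filter y0) id y0) cvg_id).
rewrite ltNge; apply/negP => ge; apply: hy; exists (F y) => //.
rewrite /C /= in_itv /= ge /=.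
have -> : t0 - F y = (t0 - y0) + (y0 - y) + (y - F y) by rewrite !addrA !subrK.
apply: (le_trans (ler_normD _ _)); apply: lerD; last by rewrite distrC; have := Fb y.
apply: (le_trans (ler_normD _ _)); apply: lerD; last exact: ltW.
exact: Fb.
Unshelve. all: by end_near.
Qed.

Theorem proposition5p1 (R : realType) (d N : nat) (A : 'M[R]_(N, d + d))
  (K : 'rV[R]_N -> 'rV[R]_(d + d)) :
  continuous K -> Zperiodic K ->
  (forall omega : 'rV[R]_N,
      symplectic_twist_diffeo (fun x : 'rV[R]_(d + d) => x + K (omega + (A *m x^T)^T))) ->
  forall omega : 'rV[R]_N,
    quasiperiodic
      (fun x : 'rV[R]_(d + d) =>
         hatPhi (fun y : 'rV[R]_(d + d) => y + K (omega + (A *m y^T)^T)) x - x).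
Proof.
move=> Kc Kp hyp w.
have tw : forall w, twist (Phw A K w) := fun w => (hyp w).2.
pose F y := xget 0 [set t | Hf A K t = y].
have HF : forall y, Hf A K (F y) = y := fun y => xgetPex 0 (Hf_ex tw y).
have Hper : forall t (k : 'rV[int]_N),
    Hf A K (t + map_mx (fun z : int => z%:~R) k) = Hf A K t + map_mx (fun z : int => z%:~R) k.
  by move=> t k; rewrite /Hf Kp addrAC.
have Fper : forall y (k : 'rV[int]_N),
    F (y + map_mx (fun z : int => z%:~R) k) = F y + map_mx (fun z : int => z%:~R) k.
  by move=> y k; apply: (Hf_inj tw); rewrite Hper !HF.
pose phi t := lin A (row_mx (lsubmx (K t)) (0:'rV[R]_d)).
have phic : continuous phi.
  move=> t; apply: (@continuous_comp _ _ _ K (fun z => lin A (row_mx (lsubmx z) (0:'rV[R]_d)))).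
    exact: Kc.
  apply: lin_cont => a x y.
  have -> : row_mx (lsubmx (a *: x + y)) (0:'rV[R]_d) =
      a *: row_mx (lsubmx x) 0 + row_mx (lsubmx y) 0.
    by rewrite linearP /= scale_row_mx add_row_mx scaler0 addr0.
  exact: linP.
have phip : Zperiodic phi by move=> y k; rewrite /phi Kp.
have [b hb] := per_bounded phic phip.
have Fb : forall y, `|F y - y| <= b.
  move=> t; have e := HF t; rewrite /Hf in e.
  by rewrite -[X in _ - X]e opprD addrA subrr add0r normrN; exact: hb.
have Hc : continuous (Hf A K).
  by move=> t; apply: (@continuousD _ _ _ id phi); [exact: cvg_id | exact: phic].
have Fc := inv_cont Hc (Hf_inj tw) HF Fb.
exists N, (fun y => row_mx (- lsubmx (K (F y))) (rsubmx (K (F y)))), w, A.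
split.
  move=> y; apply: (@continuous_comp _ _ _ F (fun t => row_mx (- lsubmx (K t)) (rsubmx (K t)))).
    exact: Fc.
  apply: (@continuous_comp _ _ _ K (fun z => row_mx (- lsubmx z) (rsubmx z))).
    exact: Kc.
  apply: lin_cont => a x z.
  by rewrite !linearP /= scale_row_mx add_row_mx.
split.
  by move=> y k; rewrite Fper Kp.
move=> x; exact: (@hat_eq R d N A K tw w x (F (w + lin A x)) (HF _)).
Qed.
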